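(* Let $f_1,\dots,f_n:\mathbb{R}^d\to\mathbb{R}$ be convex and differentiable, each with $L$-Lipschitz gradient, and let $f=\frac1n\sum_{i=1}^n f_i$ be $\lambda$-strongly convex with minimizer $x^*$. Fix $S\subseteq[n]$, a step size $\eta>0$, an epoch length $m\ge 1$, and parameters $c>0$, $\beta>0$, $\kappa>1$. Define $$\gamma=\kappa\Big[1-\big(1-\tfrac1\kappa\big)^m\Big]\Big(2c\eta\big(1-L\eta(1+\beta)\big)-\tfrac1n-\tfrac{2c}{\kappa\lambda}\Big),$$ $$\theta=\max\Big\{\tfrac{2c}{\gamma\lambda}\big(1-\tfrac1\kappa\big)^m+\tfrac{2Lc\eta^2}{\gamma}\big(1+\tfrac1\beta\big)\kappa\Big[1-\big(1-\tfrac1\kappa\big)^m\Big],\ \big(1-\tfrac1\kappa\big)^m\Big\}.$$ Suppose $$\frac1\kappa+2Lc\eta^2\Big(1+\frac1\beta\Big)\le\frac1n,\qquad \gamma>0,\qquad \theta<1,$$ and that the epoch-end selection probabilities satisfy $p_j\propto(1-\frac1\kappa)^{m-j}$, $j=1,\dots,m$. Then the iterates of the synchronous HSAG algorithm (described in the context) satisfy, for every $k\ge 0$, $$\mathbb{E}\Big[f(\tilde x^{k+1})-f(x^* )+\tfrac1\gamma\tilde G_{k+1}\Big]\le\theta\,\mathbb{E}\Big[f(\tilde x^{k})-f(x^* )+\tfrac1\gamma\tilde G_{k}\Big].$$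
   Context: Notation: $[n]=\{1,\dots,n\}$; for a differentiable convex $g$, the Bregman divergence is $D_g(x,y)=g(x)-g(y)-\langle\nabla g(y),x-y\rangle$. Synchronous HSAG algorithm (generic variance-reduced method with the HSAG schedule and epoch length $m$): start from $x^0\in\mathbb{R}^d$, set $\tilde x^0=x^0$ and $\alpha_i^0=x^0$ for all $i\in[n]$. The algorithm runs in epochs; epoch $k+1$ ($k=0,1,2,\dots$) consists of the steps $t=km,\dots,km+m-1$, and at its start $x^{km}=\tilde x^k$. At each step $t$, an index $i_t$ is drawn uniformly from $[n]$, independently of everything before, and $$x^{t+1}=x^t-\eta\Big(\nabla f_{i_t}(x^t)-\nabla f_{i_t}(\alpha_{i_t}^t)+\tfrac1n\textstyle\sum_{i=1}^n\nabla f_i(\alpha_i^t)\Big).$$ The auxiliary points $\alpha_i^t$ are updated by the HSAG schedule: for $i\in S$, $\alpha_i^{t+1}=x^t$ if $i_t=i$ and $\alpha_i^{t+1}=\alpha_i^t$ otherwise (SAGA-type); for $i\notin S$, $\alpha_i^t=\tilde x^k$ for all $t$ in epoch $k+1$ (SVRG-type, refreshed to the current iterate at the start of each epoch). At the end of epoch $k+1$, $\tilde x^{k+1}$ is chosen at random from $\{x^{km},x^{km+1},\dots,x^{km+m-1}\}$, selecting $x^{km+j-1}$ with probability $p_j$ ($j=1,\dots,m$), and $x^{(k+1)m}$ is set to $\tilde x^{k+1}$. (Special cases: $S=[n]$ gives SAGA, $S=\emptyset$ gives SVRG.) Define $\tilde G_k=\frac1n\sum_{i\in S}\big(f_i(\alpha_i^{km})-f_i(x^*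 )-\langle\nabla f_i(x^* ),\alpha_i^{km}-x^*\rangle\big)$. Expectations are over all random indices and epoch-end selections. *)

(* Defs.v *)
From Stdlib Require Import Reals.
From mathcomp Require Import all_boot.
Set Implicit Arguments. Unset Strict Implicit. Unset Printing Implicit Defensive.

Local Open Scope R_scope.

Definition vec (d : nat) := 'I_d -> R.

Definition vadd d (u v : vec d) : vec d := fun j => u j + v j.
Definition vsub d (u v : vec d) : vec d := fun j => u j - v j.
Definition vscale d (a : R) (u : vec d) : vec d := fun j => a * u j.
Definition inner d (u v : vec d) : R := \big[Rplus/0]_(j < d) (u j * v j).
Definition vnorm d (u : vec d) : R := sqrt (inner u u).

Definition has_gradient d (f : vec d -> R) (g : vec d -> vec d) : Prop :=
  forall x eps, 0 < eps -> exists delta, 0 < delta /\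
    forall h, vnorm h < delta ->
      Rabs (f (vadd x h) - f x - inner (g x) h) <= eps * vnorm h.

Definition convex d (f : vec d -> R) : Prop :=
  forall x y t, 0 <= t <= 1 ->
    f (vadd (vscale t x) (vscale (1 - t) y)) <= t * f x + (1 - t) * f y.

Definition strongly_convex d (lam : R) (f : vec d -> R) : Prop :=
  forall x y t, 0 <= t <= 1 ->
    f (vadd (vscale t x) (vscale (1 - t) y))
      <= t * f x + (1 - t) * f y - lam / 2 * t * (1 - t) * (vnorm (vsub x y)) ^ 2.

Definition lipschitz_grad d (L : R) (g : vec d -> vec d) : Prop :=
  forall x y, vnorm (vsub (g x) (g y)) <= L * vnorm (vsub x y).

Definition avg_fun d n (fs : 'I_n -> vec d -> R) : vec d -> R :=
  fun x => / INR n * \big[Rplus/0]_(i < n) fs i x.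

Definition bregman d (f : vec d -> R) (g : vec d -> vec d) (x y : vec d) : R :=
  f x - f y - inner (g y) (vsub x y).

(* Inner state during an epoch: (x^t, (alpha_i^t)_i). *)
Definition inner_state d n := (vec d * ('I_n -> vec d))%type.

Definition hsag_step d n (grad : 'I_n -> vec d -> vec d) (S : {set 'I_n})
    (eta : R) (st : inner_state d n) (i : 'I_n) : inner_state d n :=
  let x := st.1 in let a := st.2 in
  ( fun j => x j - eta * (grad i x j - grad i (a i) j
                + / INR n * \big[Rplus/0]_(l < n) grad l (a l) j),
    fun l => if (l == i) && (l \in S) then x else a l ).

Fixpoint hsag_traj d n (grad : 'I_n -> vec d -> vec d) (S : {set 'I_n}) (eta : R) (st : inner_state d n) (ws : seq 'I_n)
    : seq (inner_state d n) :=
  st :: match ws with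
        | [::] => [::]
        | i :: ws' => hsag_traj grad S eta (hsag_step grad S eta st i) ws'
        end.

(* Epoch-level state: (x~^k, (alpha_i^{km})_i). *)
(* next epoch state, given the m drawn indices w (w t = i_{km+t}) and the
   selection index j : 'I_m, meaning x~^{k+1} = x^{km+j} (i.e. the paper's
   selection j+1, probability p_{j+1}). *)
Definition hsag_epoch d n m (grad : 'I_n -> vec d -> vec d) (S : {set 'I_n}) (eta : R) (s : inner_state d n)
    (w : {ffun 'I_m -> 'I_n}) (j : 'I_m) : inner_state d n :=
  let xt := s.1 in
  let st0 : inner_state d n := (xt, fun i => if i \in S then s.2 i else xt) in
  let tr := hsag_traj grad S eta st0 [seq w t | t <- enum 'I_m] in
  ((nth st0 tr j).1, (nth st0 tr m).2).

(* Transition (Markov) operator of one epoch: conditional expectation of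
   Phi(next epoch state) given the current epoch state.  The indices are i.i.d.
   uniform on [n] (each sequence has probability (1/n)^m) and the selection is
   independent with probabilities p_1..p_m. *)
Definition epoch_op d n m (grad : 'I_n -> vec d -> vec d) (S : {set 'I_n}) (eta : R) (p : nat -> R)
    (Phi : inner_state d n -> R) (s : inner_state d n) : R :=
  \big[Rplus/0]_(w : {ffun 'I_m -> 'I_n})
     ((/ INR n) ^ m * \big[Rplus/0]_(j < m) (p (j.+1) * Phi (hsag_epoch grad S eta s w j))).

(* E[ Phi(x~^k, alpha^{km}) ] for the algorithm started at x0 with alpha_i^0 = x0. *)
Definition hsag_expect d n m (grad : 'I_n -> vec d -> vec d) (S : {set 'I_n}) (eta : R) (p : nat -> R) (x0 : vec d) (k : nat)
    (Phi : inner_state d n -> R) : R :=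
  Nat.iter k (epoch_op m grad S eta p) Phi (x0, fun _ => x0).

Definition Gtilde d n (fs : 'I_n -> vec d -> R) (grad : 'I_n -> vec d -> vec d) (S : {set 'I_n}) (xstar : vec d)
    (s : inner_state d n) : R :=
  / INR n * \big[Rplus/0]_(i < n | i \in S) bregman (fs i) (grad i) (s.2 i) xstar.

Definition hsag_gamma (n m : nat) (L lam eta c beta kappa : R) : R :=
  kappa * (1 - (1 - / kappa) ^ m) *
  (2 * c * eta * (1 - L * eta * (1 + beta)) - / INR n - 2 * c / (kappa * lam)).

Definition hsag_theta (n m : nat) (L lam eta c beta kappa : R) : R :=
  let g := hsag_gamma n m L lam eta c beta kappa in
  Rmax (2 * c / (g * lam) * (1 - / kappa) ^ m
        + 2 * L * c * eta ^ 2 / g * (1 + / beta) * kappa * (1 - (1 - / kappa) ^ m))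
       ((1 - / kappa) ^ m).

(* Main.v *)
Require Import Defs.
From HB Require Import structures.
From Stdlib Require Import Reals Lra Lia Psatz FunctionalExtensionality.
From mathcomp Require Import all_boot.
Set Implicit Arguments. Unset Strict Implicit.
Local Open Scope R_scope.

HB.instance Definition _ := Monoid.isComLaw.Build R 0 Rplus (fun a b c => esym (Rplus_assoc a b c)) Rplus_comm Rplus_0_l.
HB.instance Definition _ := Monoid.isComLaw.Build R 1 Rmult (fun a b c => esym (Rmult_assoc a b c)) Rmult_comm Rmult_1_l.
HB.instance Definition _ := Monoid.isMulLaw.Build R 0 Rmult Rmult_0_l Rmult_0_r.
HB.instance Definition _ := Monoid.isAddLaw.Build R Rmult Rplus Rmult_plus_distr_r Rmult_plus_distr_l.

Section Sums.
Variable T : Type.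
Variable r : seq T.
Implicit Types F G : T -> R.

Lemma sumR_le (P : pred T) F G : (forall i, P i -> F i <= G i) ->
  \big[Rplus/0]_(i <- r | P i) F i <= \big[Rplus/0]_(i <- r | P i) G i.
Proof. move=> H; apply: (big_ind2 (fun a b => a <= b)) => //; [lra| move=> *; lra]. Qed.

Lemma sumR_ge0 (P : pred T) F : (forall i, P i -> 0 <= F i) ->
  0 <= \big[Rplus/0]_(i <- r | P i) F i.
Proof. move=> H; apply: (big_ind (fun a => 0 <= a)) => //; [lra| move=> *; lra]. Qed.

Lemma sumR_opp (P : pred T) F : \big[Rplus/0]_(i <- r | P i) (- F i) = - \big[Rplus/0]_(i <- r | P i) F i.
Proof. elim/big_rec2: _ => [|i a b _ ->]; lra. Qed.

Lemma sumR_sub (P : pred T) F G : \big[Rplus/0]_(i <- r | P i) (F i - G i) =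
  \big[Rplus/0]_(i <- r | P i) F i - \big[Rplus/0]_(i <- r | P i) G i.
Proof. by rewrite /Rminus big_split sumR_opp. Qed.

Lemma sumR_scal (P : pred T) a F : \big[Rplus/0]_(i <- r | P i) (a * F i) = a * \big[Rplus/0]_(i <- r | P i) F i.
Proof. by rewrite big_distrr. Qed.
End Sums.

Section SumsF.
Variable I : finType.
Lemma sumR_const (c : R) : \big[Rplus/0]_(i : I) c = INR #|I| * c.
Proof.
rewrite big_const; elim: #|I| => [|k IH]; first by rewrite /=; lra.
rewrite S_INR Rmult_plus_distr_r -IH; simpl iter; lra.
Qed.
End SumsF.

Lemma sumR_const_ord n (c : R) : \big[Rplus/0]_(i < n) c = INR n * c.
Proof. by rewrite sumR_const card_ord. Qed.

Lemma sumR_if_eq n (l : 'I_n) (A B : R) :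
  \big[Rplus/0]_(i < n) (if l == i then A else B) = INR n * B + (A - B).
Proof.
have -> : \big[Rplus/0]_(i < n) (if l == i then A else B) =
   \big[Rplus/0]_(i < n) (B + (if l == i then A - B else 0)).
  by apply: eq_bigr => i _; case: (l == i); lra.
rewrite big_split sumR_const_ord (bigD1 l) //= eqxx big1; first lra.
by move=> i /negbTE; rewrite eq_sym => ->.
Qed.

Definition nsq d (u : vec d) := inner u u.

Lemma inner_sym d (u v : vec d) : inner u v = inner v u.
Proof. by apply: eq_bigr => j _; rewrite Rmult_comm. Qed.

Lemma inner_lin_l d a b (u v w : vec d) :
  inner (fun j => a * u j + b * v j) w = a * inner u w + b * inner v w.
Proof. rewrite /inner -!sumR_scal -big_split; apply: eq_bigr => j _ /=; ring. Qed.

Lemma inner_lin_r d a b (u v w : vec d) :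
  inner w (fun j => a * u j + b * v j) = a * inner w u + b * inner w v.
Proof. rewrite /inner -!sumR_scal -big_split; apply: eq_bigr => j _ /=; ring. Qed.

Lemma inner_sum_l d n (U : 'I_n -> vec d) w :
  inner (fun j => \big[Rplus/0]_(i < n) U i j) w = \big[Rplus/0]_(i < n) inner (U i) w.
Proof.
rewrite /inner exchange_big /=; apply: eq_bigr => j _.
by rewrite big_distrl.
Qed.

Lemma nsq_ge0 d (u : vec d) : 0 <= nsq u.
Proof. apply: sumR_ge0 => j _; nra. Qed.

Lemma nsq_eq0 d (u : vec d) : nsq u = 0 -> forall j, u j = 0.
Proof.
move=> H j; have : u j * u j <= nsq u.
  rewrite /nsq /inner (bigD1 j) //=.
  have : 0 <= \big[Rplus/0]_(i < d | i != j) (u i * u i) by apply: sumR_ge0 => i _; nra.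
  set X := \big[Rplus/0]_(i < d | i != j) (u i * u i); lra.
rewrite H => ?; nra.
Qed.

Lemma inner_zero_l d (u v : vec d) : (forall j, u j = 0) -> inner u v = 0.
Proof. move=> H; rewrite /inner big1 // => j _; rewrite H; lra. Qed.

Lemma nsq_expand d a (u v : vec d) :
  nsq (fun j => u j + a * v j) = nsq u + 2 * a * inner u v + a * a * nsq v.
Proof. rewrite /nsq /inner -!sumR_scal -!big_split; apply: eq_bigr => j _ /=; ring. Qed.

Lemma vnorm_sq d (u : vec d) : vnorm u ^ 2 = nsq u.
Proof. rewrite /vnorm /= Rmult_1_r sqrt_sqrt //; exact: nsq_ge0. Qed.

Lemma vnorm_ge0 d (u : vec d) : 0 <= vnorm u.
Proof. exact: sqrt_pos. Qed.

Lemma cauchy_schwarz d (u v : vec d) : inner u v <= vnorm u * vnorm v.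
Proof.
have [H0|Hp] : nsq v = 0 \/ 0 < nsq v by have := nsq_ge0 v; lra.
  rewrite inner_sym inner_zero_l; [|exact: nsq_eq0].
  by apply: Rmult_le_pos; apply: vnorm_ge0.
set s := inner u v / nsq v.
have H := nsq_ge0 (fun j => u j + (- s) * v j).
rewrite nsq_expand in H.
have Hsq : inner u v ^ 2 <= nsq u * nsq v.
  have : nsq u - inner u v * inner u v / nsq v >= 0.
    rewrite /s in H. have -> : nsq u - inner u v * inner u v / nsq v =
       nsq u + 2 * - (inner u v / nsq v) * inner u v + - (inner u v / nsq v) * - (inner u v / nsq v) * nsq v by field; lra.
    lra.
  move=> H2; have : (nsq u - inner u v * inner u v / nsq v) * nsq v >= 0 by nra.
  have -> : (nsq u - inner u v * inner u v / nsq v) * nsq v = nsq u * nsq v - inner u v ^2 by field; lra.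
  lra.
have -> : vnorm u * vnorm v = sqrt (nsq u * nsq v) by rewrite sqrt_mult //; apply: nsq_ge0.
apply: Rle_trans (Rle_abs _) _.
rewrite -sqrt_Rsqr_abs; apply: sqrt_le_1_alt; rewrite /Rsqr; nra.
Qed.

Lemma vnorm_scale d t (h : vec d) : vnorm (fun j => t * h j) = Rabs t * vnorm h.
Proof.
rewrite /vnorm.
have -> : inner (fun j => t * h j) (fun j => t * h j) = (t * t) * inner h h.
  rewrite /inner -sumR_scal; apply: eq_bigr => j _ /=; ring.
rewrite sqrt_mult; [|nra|exact: nsq_ge0].
by rewrite -[t * t]/(Rsqr t) sqrt_Rsqr_abs.
Qed.

Lemma div_lt1 a b : 0 < b -> a < b -> a / b < 1.
Proof.
move=> Hb Hab; have := Rmult_lt_compat_r (/ b) a b (Rinv_0_lt_compat _ Hb) Hab.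
rewrite Rinv_r; [rewrite /Rdiv; lra | lra].
Qed.

Lemma inner_scale_r d t (w u : vec d) : inner w (fun j => t * u j) = t * inner w u.
Proof. rewrite /inner -sumR_scal; apply: eq_bigr => j _ /=; ring. Qed.

Lemma grad_ineq d (f : vec d -> R) g (Hg : has_gradient f g) (Hc : convex f) x y :
  f x + inner (g x) (vsub y x) <= f y.
Proof.
set h := vsub y x; set a := inner (g x) h.
destruct (Rle_lt_dec (f x + a) (f y)) as [|Hlt]; first by [].
exfalso.
set vn := vnorm h.
have Hvn : 0 <= vn by apply: vnorm_ge0.
set gap := f x + a - f y.
have Hgap : 0 < gap by rewrite /gap; lra.
have Heps : 0 < gap / (2 * (vn + 1)) by apply: Rdiv_lt_0_compat; lra.
have [del [Hdel Hd]] := Hg x _ Heps.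
set t := Rmin 1 (del / (2 * (vn + 1))).
have Ht0 : 0 < t by apply: Rmin_pos; [lra| apply: Rdiv_lt_0_compat; lra].
have Ht1 : t <= 1 by apply: Rmin_l.
have Ht2 : t <= del / (2 * (vn + 1)) by apply: Rmin_r.
have Hk : vnorm (fun j => t * h j) = t * vn by rewrite vnorm_scale Rabs_pos_eq; [by [] | lra].
have Hkd : vnorm (fun j => t * h j) < del.
  rewrite Hk; have : t * vn <= del / (2 * (vn + 1)) * vn by apply: Rmult_le_compat_r.
  have : del / (2 * (vn + 1)) * vn < del.
    have -> : del / (2 * (vn + 1)) * vn = del * (vn / (2 * (vn + 1))) by field; lra.
    have : vn / (2 * (vn + 1)) < 1 by apply: div_lt1; lra.
    nra.
  lra.
have := Hd _ Hkd; rewrite inner_scale_r Hk -/a => Habs.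
have Hconv := Hc y x t (conj (Rlt_le _ _ Ht0) Ht1).
have Heq : vadd (vscale t y) (vscale (1 - t) x) = vadd x (fun j => t * h j).
  apply: functional_extensionality => j; rewrite /vadd /vscale /h /vsub; ring.
rewrite Heq in Hconv.
have H1 := Rle_abs (- (f (vadd x (fun j => t * h j)) - f x - t * a)).
rewrite Rabs_Ropp in H1.
have H2 : t * gap <= gap / (2 * (vn + 1)) * (t * vn).
  have -> : t * gap = t * a + t * f x - t * f y by rewrite /gap; ring.
  have : (1 - t) * f x = f x - t * f x by ring.
  lra.
have H3 : gap / (2 * (vn + 1)) * (t * vn) = t * (gap * (vn / (2 * (vn + 1)))) by field; lra.
have H4 : vn / (2 * (vn + 1)) < 1 by apply: div_lt1; lra.
have H5 : 0 <= vn / (2 * (vn + 1)) by apply: Rmult_le_pos; [lra | apply: Rlt_le; apply: Rinv_0_lt_compat; lra].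
have : t * (gap * (vn / (2 * (vn + 1)))) < t * gap.
  apply: Rmult_lt_compat_l => //. 
  have : gap * (vn / (2 * (vn + 1))) < gap * 1 by apply: Rmult_lt_compat_l.
  lra.
lra.
Qed.

Lemma poly_d a K s : derivable_pt_lim (fun s => a * s + K * (s * s)) s (a + K * (2 * s)).
Proof.
have H1 := derivable_pt_lim_scal id a s 1 (derivable_pt_lim_id s).
have H2 := derivable_pt_lim_mult id id s 1 1 (derivable_pt_lim_id s) (derivable_pt_lim_id s).
have H3 := derivable_pt_lim_scal _ K s _ H2.
have H4 := derivable_pt_lim_plus _ _ s _ _ H1 H3.
rewrite /plus_fct /mult_real_fct /mult_fct /id in H4.
have -> : a + K * (2 * s) = a * 1 + K * (1 * s + s * 1) by ring.
exact: H4.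
Qed.

Lemma line_deriv d (f : vec d -> R) g (Hg : has_gradient f g) x h t :
  derivable_pt_lim (fun s => f (vadd x (fun j => s * h j))) t
    (inner (g (vadd x (fun j => t * h j))) h).
Proof.
move=> eps Heps.
set z := vadd x (fun j => t * h j).
set vn := vnorm h.
have Hvn : 0 <= vn by apply: vnorm_ge0.
have Heps' : 0 < eps / (2 * (vn + 1)) by apply: Rdiv_lt_0_compat; lra.
have [del [Hdel Hd]] := Hg z _ Heps'.
have Hdp : 0 < del / (vn + 1) by apply: Rdiv_lt_0_compat; lra.
exists (mkposreal _ Hdp) => s Hs0 Hs /=.
have Hsv : vnorm (fun j => s * h j) < del.
  rewrite vnorm_scale -/vn.
  have : Rabs s * (vn + 1) < del.
    have := Rmult_lt_compat_r (vn + 1) _ _ ltac:(lra) Hs.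
    rewrite /Rdiv Rmult_assoc Rinv_l; lra.
  have := Rabs_pos s; nra.
have := Hd _ Hsv; rewrite inner_scale_r vnorm_scale -/vn => Habs.
have Heq : vadd x (fun j => (t + s) * h j) = vadd z (fun j => s * h j).
  apply: functional_extensionality => j; rewrite /z /vadd /=; ring.
rewrite Heq.
set num := f (vadd z (fun j => s * h j)) - f z - s * inner (g z) h.
have -> : (f (vadd z (fun j => s * h j)) - f (vadd x (fun j => t * h j))) / s - inner (g z) h
   = num / s by rewrite /num /z; field.
rewrite /Rdiv Rabs_mult Rabs_inv.
have Has : 0 < Rabs s by apply: Rabs_pos_lt.
apply: (Rmult_lt_reg_r (Rabs s)) => //.
rewrite Rmult_assoc Rinv_l; last lra.
rewrite Rmult_1_r.
apply: Rle_lt_trans Habs _.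
have -> : eps / (2 * (vn + 1)) * (Rabs s * vn) = eps * Rabs s * (vn / (2 * (vn + 1))) by field; lra.
have : vn / (2 * (vn + 1)) < 1 by apply: div_lt1; lra.
have : 0 < eps * Rabs s by apply: Rmult_lt_0_compat.
nra.
Qed.

Lemma descent d (f : vec d -> R) g L (Hg : has_gradient f g) (HL : lipschitz_grad L g) x h :
  f (vadd x h) <= f x + inner (g x) h + L / 2 * nsq h.
Proof.
set a := inner (g x) h; set K := L / 2 * nsq h.
set phi := fun s => f (vadd x (fun j => s * h j)).
set phi' := fun s => inner (g (vadd x (fun j => s * h j))) h.
have Hd : forall s, derivable_pt_lim (fun s => phi s - (a * s + K * (s * s))) s
                      (phi' s - (a + K * (2 * s))).
  move=> s; apply: (derivable_pt_lim_minus phi (fun s => a * s + K * (s * s))).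
    exact: line_deriv.
  exact: poly_d.
have [c [Hc Hc01]] := MVT_cor2 _ _ 0 1 Rlt_0_1 (fun c _ => Hd c).
have Hphi' : phi' c - (a + K * (2 * c)) <= 0.
  rewrite /phi' /a /K.
  set y := vadd x (fun j => c * h j).
  have -> : inner (g y) h - (inner (g x) h + L / 2 * nsq h * (2 * c)) =
     inner (vsub (g y) (g x)) h - L * c * nsq h.
    have -> : vsub (g y) (g x) = (fun j => 1 * g y j + (-1) * g x j).
      by apply: functional_extensionality => j; rewrite /vsub; ring.
    rewrite inner_lin_l; field.
  have H1 := cauchy_schwarz (vsub (g y) (g x)) h.
  have H2 := HL y x.
  have H3 : vsub y x = (fun j => c * h j).
    by apply: functional_extensionality => j; rewrite /vsub /y /vadd /=; ring.
  rewrite H3 vnorm_scale Rabs_pos_eq in H2; last lra.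
  have H4 := vnorm_ge0 h.
  have H5 : vnorm (vsub (g y) (g x)) * vnorm h <= L * (c * vnorm h) * vnorm h by apply: Rmult_le_compat_r.
  have H6 : vnorm h * vnorm h = nsq h by rewrite -vnorm_sq /=; ring.
  nra.
have Hval : phi 1 - (a * 1 + K * (1 * 1)) - (phi 0 - (a * 0 + K * (0 * 0))) <= 0.
  rewrite Hc; nra.
have E1 : phi 1 = f (vadd x h).
  by rewrite /phi; congr f; apply: functional_extensionality => j; rewrite /vadd; ring.
have E0 : phi 0 = f x.
  by rewrite /phi; congr f; apply: functional_extensionality => j; rewrite /vadd; ring.
rewrite /K in Hval; lra.
Qed.

Lemma inner_scale_l d t (w u : vec d) : inner (fun j => t * u j) w = t * inner u w.
Proof. rewrite /inner -sumR_scal; apply: eq_bigr => j _ /=; ring. Qed.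

Lemma inner_zero_r d (u v : vec d) : (forall j, v j = 0) -> inner u v = 0.
Proof. by move=> H; rewrite inner_sym inner_zero_l. Qed.

Lemma nsq_scale d t (u : vec d) : nsq (fun j => t * u j) = t * t * nsq u.
Proof. rewrite /nsq /inner -sumR_scal; apply: eq_bigr => j _ /=; ring. Qed.

Lemma vnorm0_nsq d (u : vec d) : vnorm u <= 0 -> nsq u = 0.
Proof. move=> H; have := vnorm_ge0 u; have := vnorm_sq u => /= E ?. nra. Qed.

Lemma cocoercive d (f : vec d -> R) g L (Hg : has_gradient f g) (Hc : convex f)
  (HL : lipschitz_grad L g) x y :
  nsq (vsub (g y) (g x)) <= 2 * L * bregman f g y x.
Proof.
set w := vsub (g y) (g x).
have [Lneg|[L0|Lpos]] : L < 0 \/ L = 0 \/ 0 < L by lra.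
- have H := HL y x; have Hw := vnorm_ge0 (vsub (g y) (g x)); have Hv := vnorm_ge0 (vsub y x).
  have Hv0 : vnorm (vsub y x) <= 0 by nra.
  have Hyx : y = x.
    apply: functional_extensionality => j.
    have := nsq_eq0 (vnorm0_nsq Hv0) j; rewrite /vsub; lra.
  have Hw0 : nsq w = 0 by apply: vnorm0_nsq; rewrite /w; nra.
  rewrite Hw0 /bregman Hyx inner_zero_r; last by move=> j; rewrite /vsub; lra.
  lra.
- have H := HL y x; rewrite L0 in H.
  have Hw0 : nsq w = 0 by apply: vnorm0_nsq; rewrite /w; nra.
  rewrite Hw0 L0; lra.
set iL := / L.
have Hd := descent Hg HL y (fun j => (- iL) * w j).
have Hgi := grad_ineq Hg Hc x (vadd y (fun j => (- iL) * w j)).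
have E1 : vsub (vadd y (fun j => (- iL) * w j)) x = (fun j => 1 * vsub y x j + (- iL) * w j).
  by apply: functional_extensionality => j; rewrite /vsub /vadd /=; ring.
rewrite E1 inner_lin_r in Hgi.
rewrite inner_scale_r nsq_scale in Hd.
have E2 : inner (g y) w - inner (g x) w = nsq w.
  rewrite /nsq; have -> : w = (fun j => 1 * g y j + (-1) * g x j).
    by apply: functional_extensionality => j; rewrite /w /vsub /=; ring.
  rewrite !inner_lin_l inner_lin_r. rewrite !(inner_sym (g y)) !(inner_sym (g x)). ring.
have E3 : iL * inner (g y) w - iL * inner (g x) w = iL * nsq w by rewrite -E2; ring.
rewrite /bregman.
have HiL : L * iL = 1 by rewrite /iL; field; lra.
have Hn := nsq_ge0 w.
have E4 : L / 2 * (- iL * - iL) * nsq w = iL * nsq w / 2 by rewrite /iL; field; lra.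
have Key : iL * nsq w / 2 <= f y - f x - inner (g x) (vsub y x).
  have E5 : - iL * inner (g y) w = - (iL * inner (g y) w) by ring.
  have E6 : - iL * inner (g x) w = - (iL * inner (g x) w) by ring.
  lra.
have := Rmult_le_compat_l (2 * L) _ _ ltac:(lra) Key.
have -> : 2 * L * (iL * nsq w / 2) = (L * iL) * nsq w by field.
rewrite HiL; lra.
Qed.

Lemma le_addr a b : 0 <= b -> a <= a + b.
Proof. lra. Qed.

Lemma INR_pos n : (0 < n)%nat -> 0 < INR n.
Proof. move=> H; apply: lt_0_INR; apply/ltP. exact: H. Qed.

Lemma grad_zero d n (fs : 'I_n -> vec d -> R) grad L xstar (Hn : (0 < n)%nat)
  (Hgrad : forall i, has_gradient (fs i) (grad i))
  (HL : forall i, lipschitz_grad L (grad i))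
  (Hmin : forall x, avg_fun fs xstar <= avg_fun fs x) :
  forall j, \big[Rplus/0]_(i < n) grad i xstar j = 0.
Proof.
set W := fun j => \big[Rplus/0]_(i < n) grad i xstar j.
have HnR := INR_pos Hn.
set t := / (INR n * Rabs L + 1).
have HLa := Rabs_pos L.
have Ht : 0 < t by apply: Rinv_0_lt_compat; nra.
set h := fun j => (- t) * W j.
have Hsum : \big[Rplus/0]_(i < n) fs i (vadd xstar h) <=
   \big[Rplus/0]_(i < n) (fs i xstar + inner (grad i xstar) h + L / 2 * nsq h).
  apply: sumR_le => i _; exact: descent.
rewrite !big_split /= sumR_const_ord -inner_sum_l -/W in Hsum.
rewrite /h inner_scale_r nsq_scale in Hsum.
have Hm := Hmin (vadd xstar h); rewrite /avg_fun /h in Hm.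
have Hm2 : \big[Rplus/0]_(i < n) fs i xstar <= \big[Rplus/0]_(i < n) fs i (vadd xstar (fun j => - t * W j)).
  apply: (Rmult_le_reg_l (/ INR n)) => //; exact: Rinv_0_lt_compat.
set N := nsq W.
have HN := nsq_ge0 W.
have Hc : 0 <= t * N * (-1 + INR n * L * t / 2).
  have : 0 <= - t * inner W W + INR n * (L / 2 * (- t * - t * nsq W)).
    set A := \big[Rplus/0]_(i < n) fs i xstar in Hsum Hm2.
    set B := \big[Rplus/0]_(i < n) fs i (vadd xstar (fun j => - t * W j)) in Hsum Hm2.
    lra.
  rewrite /N /nsq; move=> H; have -> : t * inner W W * (-1 + INR n * L * t / 2) =
    - t * inner W W + INR n * (L / 2 * (- t * - t * inner W W)) by field.
  exact: H.
have Hlt : INR n * L * t / 2 < 1.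
  have : INR n * L <= INR n * Rabs L by apply: Rmult_le_compat_l; [lra| apply: Rle_abs].
  have : INR n * Rabs L * t < 1.
    rewrite /t; have -> : INR n * Rabs L * / (INR n * Rabs L + 1) = INR n * Rabs L / (INR n * Rabs L + 1) by [].
    apply: div_lt1; nra.
  move=> H1 H2; have : INR n * L * t <= INR n * Rabs L * t by apply: Rmult_le_compat_r; lra.
  lra.
have HN0 : N = 0.
  have : t * N * (-1 + INR n * L * t / 2) <= 0.
    have : 0 <= t * N by apply: Rmult_le_pos; [lra | exact: HN].
    move=> H; have := Rmult_le_compat_l (t * N) _ 0 H (ltac:(lra) : -1 + INR n * L * t / 2 <= 0). lra.
  move=> H.
  have : t * N * (-1 + INR n * L * t / 2) = 0 by lra.
  move/Rmult_integral => [/Rmult_integral [|]|]; lra.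
move=> j; exact: (nsq_eq0 HN0 j).
Qed.

Lemma strong_lb d (F : vec d -> R) lam xstar (Hlam : 0 < lam)
  (Hsc : strongly_convex lam F) (Hmin : forall x, F xstar <= F x) x :
  lam / 2 * nsq (vsub x xstar) <= F x - F xstar.
Proof.
set Q := nsq (vsub x xstar).
have HQ : 0 <= Q := nsq_ge0 (vsub x xstar).
have key : forall t, 0 < t <= 1 -> lam / 2 * (1 - t) * Q <= F x - F xstar.
  move=> t [Ht0 Ht1].
  have H := Hsc x xstar t (conj (Rlt_le _ _ Ht0) Ht1).
  have Hm := Hmin (vadd (vscale t x) (vscale (1 - t) xstar)).
  rewrite vnorm_sq -/Q in H.
  have : t * (lam / 2 * (1 - t) * Q) <= t * (F x - F xstar).
    have -> : t * (lam / 2 * (1 - t) * Q) = lam / 2 * t * (1 - t) * Q by ring.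
    have -> : t * (F x - F xstar) = t * F x + (1 - t) * F xstar - F xstar by ring.
    lra.
  move=> H2; apply: (Rmult_le_reg_l t) => //.
destruct (Rle_lt_dec (lam / 2 * Q) (F x - F xstar)) as [|Hlt]; first by [].
exfalso.
have Hfx0 := Hmin x.
have HQp : 0 < Q by nra.
set t := (lam / 2 * Q - (F x - F xstar)) / (lam * Q).
have Ht0 : 0 < t by apply: Rdiv_lt_0_compat; nra.
have Ht1 : t <= 1.
  have Hfx : 0 <= F x - F xstar by have := Hmin x; lra.
  rewrite /t; apply: Rlt_le; apply: div_lt1; nra.
have := key t (conj Ht0 Ht1).
have -> : lam / 2 * (1 - t) * Q = lam / 2 * Q - (lam / 2 * Q - (F x - F xstar)) / 2.
  by rewrite /t; field; nra.
lra.
Qed.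

Definition Fgap d n (fs : 'I_n -> vec d -> R) xstar x := avg_fun fs x - avg_fun fs xstar.
Definition Nsum d n (fs : 'I_n -> vec d -> R) grad (S : {set 'I_n}) xstar (s : inner_state d n) :=
  / INR n * \big[Rplus/0]_(i < n | i \notin S) bregman (fs i) (grad i) (s.2 i) xstar.

Lemma bregman_avg d n (fs : 'I_n -> vec d -> R) grad L xstar (Hn : (0 < n)%nat)
  (Hgrad : forall i, has_gradient (fs i) (grad i))
  (HL : forall i, lipschitz_grad L (grad i))
  (Hmin : forall x, avg_fun fs xstar <= avg_fun fs x) x :
  / INR n * \big[Rplus/0]_(i < n) bregman (fs i) (grad i) x xstar = Fgap fs xstar x.
Proof.
rewrite /bregman /Fgap /avg_fun !sumR_sub -inner_sum_l inner_zero_l; last first.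
  exact: (grad_zero Hn Hgrad HL Hmin).
by rewrite Rminus_0_r Rmult_minus_distr_l.
Qed.

Lemma step_G d n (fs : 'I_n -> vec d -> R) grad L xstar S eta (Hn : (0 < n)%nat)
  (Hgrad : forall i, has_gradient (fs i) (grad i))
  (Hconv : forall i, convex (fs i))
  (HL : forall i, lipschitz_grad L (grad i))
  (Hmin : forall x, avg_fun fs xstar <= avg_fun fs x) (st : inner_state d n) :
  / INR n * \big[Rplus/0]_(i < n) Gtilde fs grad S xstar (hsag_step grad S eta st i)
  <= (1 - / INR n) * Gtilde fs grad S xstar st + / INR n * Fgap fs xstar st.1.
Proof.
have HnR := INR_pos Hn.
case: st => x a /=.
rewrite /Gtilde /hsag_step /= sumR_scal exchange_big /=.
rewrite (eq_bigr (fun l => INR n * bregman (fs l) (grad l) (a l) xstar +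
     (bregman (fs l) (grad l) x xstar - bregman (fs l) (grad l) (a l) xstar))); last first.
  move=> l Hl; rewrite -(sumR_if_eq l); apply: eq_bigr => i _.
  by rewrite Hl andbT; case: (l == i).
rewrite big_split /= sumR_sub sumR_scal.
have Hsub : / INR n * \big[Rplus/0]_(l < n | l \in S) bregman (fs l) (grad l) x xstar
    <= Fgap fs xstar x.
  rewrite -(bregman_avg Hn Hgrad HL Hmin x).
  apply: Rmult_le_compat_l; first by apply: Rlt_le; apply: Rinv_0_lt_compat.
  rewrite [X in _ <= X](bigID (fun l => l \in S)) /=.
  apply: le_addr; apply: sumR_ge0 => i _; rewrite /bregman.
  have := grad_ineq (Hgrad i) (Hconv i) xstar x; lra.
set GS := \big[Rplus/0]_(l < n | l \in S) bregman (fs l) (grad l) (a l) xstar in Hsub *.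
set XS := \big[Rplus/0]_(l < n | l \in S) bregman (fs l) (grad l) x xstar in Hsub *.
have -> : / INR n * (/ INR n * (INR n * GS + (XS - GS)))
   = (1 - / INR n) * (/ INR n * GS) + / INR n * (/ INR n * XS) by field; lra.
have : / INR n * (/ INR n * XS) <= / INR n * Fgap fs xstar x.
  apply: Rmult_le_compat_l => //; apply: Rlt_le; apply: Rinv_0_lt_compat => //.
lra.
Qed.

Lemma young_sc (a b beta : R) : 0 < beta ->
  (a + b) * (a + b) <= (1 + beta) * (a * a) + (1 + / beta) * (b * b).
Proof.
move=> Hb.
have H : 0 <= (beta * a - b) * (beta * a - b) / beta.
  apply: Rmult_le_pos; [exact: Rle_0_sqr | apply: Rlt_le; exact: Rinv_0_lt_compat].
have E : (beta * a - b) * (beta * a - b) / beta =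
   beta * (a * a) - 2 * (a * b) + / beta * (b * b) by field; lra.
rewrite E in H; nra.
Qed.

Lemma young d beta (A B : vec d) : 0 < beta ->
  nsq (fun j => A j + B j) <= (1 + beta) * nsq A + (1 + / beta) * nsq B.
Proof.
move=> Hb; rewrite /nsq /inner -!sumR_scal -big_split; apply: sumR_le => j _ /=.
exact: young_sc.
Qed.

Lemma variance_scalar n (u : 'I_n -> R) : (0 < n)%nat ->
  \big[Rplus/0]_(i < n) ((/ INR n * \big[Rplus/0]_(l < n) u l - u i) * (/ INR n * \big[Rplus/0]_(l < n) u l - u i))
  <= \big[Rplus/0]_(i < n) (u i * u i).
Proof.
move=> Hn; have HnR := INR_pos Hn.
set m := / INR n * \big[Rplus/0]_(l < n) u l.
have Hm : \big[Rplus/0]_(l < n) u l = INR n * m by rewrite /m; field; lra.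
have -> : \big[Rplus/0]_(i < n) ((m - u i) * (m - u i)) =
   \big[Rplus/0]_(i < n) (u i * u i) + (- 2 * m) * \big[Rplus/0]_(i < n) u i + \big[Rplus/0]_(i < n) (m * m).
  rewrite -sumR_scal -!big_split; apply: eq_bigr => i _ /=; ring.
rewrite sumR_const_ord Hm.
have : 0 <= INR n * (m * m) by nra.
set Z := \big[Rplus/0]_(i < n) (u i * u i).
nra.
Qed.

Lemma variance d n (U : 'I_n -> vec d) : (0 < n)%nat ->
  \big[Rplus/0]_(i < n) nsq (fun j => / INR n * \big[Rplus/0]_(l < n) U l j - U i j)
  <= \big[Rplus/0]_(i < n) nsq (U i).
Proof.
move=> Hn; rewrite /nsq /inner exchange_big [X in _ <= X]exchange_big /=.
apply: sumR_le => j _; exact: (variance_scalar (fun i => U i j) Hn).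
Qed.

Lemma inner_sum_r d n (U : 'I_n -> vec d) w :
  inner w (fun j => \big[Rplus/0]_(i < n) U i j) = \big[Rplus/0]_(i < n) inner w (U i).
Proof.
rewrite inner_sym inner_sum_l; apply: eq_bigr => i _; exact: inner_sym.
Qed.

Lemma step_dist d n (fs : 'I_n -> vec d -> R) grad L xstar S eta beta (Hn : (0 < n)%nat)
  (Hgrad : forall i, has_gradient (fs i) (grad i))
  (Hconv : forall i, convex (fs i))
  (HL : forall i, lipschitz_grad L (grad i))
  (Hmin : forall x, avg_fun fs xstar <= avg_fun fs x)
  (Heta : 0 <= eta) (Hbeta : 0 < beta) x a :
  / INR n * \big[Rplus/0]_(i < n) nsq (vsub (hsag_step grad S eta (x, a) i).1 xstar)
  <= nsq (vsub x xstar) - 2 * eta * Fgap fs xstar x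
     + eta ^ 2 * (2 * L * (1 + beta) * Fgap fs xstar x
         + 2 * L * (1 + / beta) * (/ INR n * \big[Rplus/0]_(l < n) bregman (fs l) (grad l) (a l) xstar)).
Proof.
have HnR := INR_pos Hn.
have Hgz := grad_zero Hn Hgrad HL Hmin.
set Da := \big[Rplus/0]_(l < n) bregman (fs l) (grad l) (a l) xstar.
set E2 := (eta ^ 2 * _).
set u := vsub x xstar.
set gb := fun j => / INR n * \big[Rplus/0]_(l < n) grad l (a l) j.
set V := fun i j => grad i x j - grad i (a i) j + gb j.
have E1 : forall i, vsub (hsag_step grad S eta (x, a) i).1 xstar = (fun j => u j + (- eta) * V i j).
  move=> i; apply: functional_extensionality => j.
  rewrite /hsag_step /u /V /gb /vsub /=; ring.
rewrite (eq_bigr (fun i => nsq u + 2 * - eta * inner u (V i) + - eta * - eta * nsq (V i)));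
  last by move=> i _; rewrite E1 nsq_expand.
rewrite !big_split /= sumR_const_ord !sumR_scal -inner_sum_r.
set W := fun j => \big[Rplus/0]_(i < n) grad i x j.
have EW : (fun j => \big[Rplus/0]_(i < n) V i j) = W.
  apply: functional_extensionality => j.
  rewrite /V !big_split /= sumR_opp sumR_const_ord /gb /W.
  set Ga := \big[Rplus/0]_(l < n) grad l (a l) j. set Gx := \big[Rplus/0]_(i < n) grad i x j. field; lra.
rewrite EW.
have HgW : INR n * Fgap fs xstar x <= inner u W.
  have : \big[Rplus/0]_(i < n) (fs i x - fs i xstar) <= \big[Rplus/0]_(i < n) inner (grad i x) u.
    apply: sumR_le => i _.
    have := grad_ineq (Hgrad i) (Hconv i) x xstar.
    have -> : vsub xstar x = (fun j => (-1) * u j).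
      by apply: functional_extensionality => j; rewrite /u /vsub /=; ring.
    rewrite inner_scale_r; lra.
  rewrite sumR_sub /W inner_sym inner_sum_l /Fgap /avg_fun.
  move=> H; have -> : INR n * (/ INR n * \big[Rplus/0]_(i < n) fs i x - / INR n * \big[Rplus/0]_(i < n) fs i xstar)
     = \big[Rplus/0]_(i < n) fs i x - \big[Rplus/0]_(i < n) fs i xstar by field; lra.
  exact: H.
set A := fun i => vsub (grad i x) (grad i xstar).
set U := fun l => vsub (grad l (a l)) (grad l xstar).
set B := fun i j => / INR n * \big[Rplus/0]_(l < n) U l j - U i j.
have EV : forall i, V i = (fun j => A i j + B i j).
  move=> i; apply: functional_extensionality => j.
  rewrite /V /A /B /U /gb /vsub /= sumR_sub Hgz; ring.
have HV : \big[Rplus/0]_(i < n) nsq (V i) <=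
   (1 + beta) * \big[Rplus/0]_(i < n) nsq (A i) + (1 + / beta) * \big[Rplus/0]_(i < n) nsq (B i).
  rewrite -!sumR_scal -big_split; apply: sumR_le => i _ /=; rewrite EV; exact: young.
have HA : \big[Rplus/0]_(i < n) nsq (A i) <= 2 * L * (INR n * Fgap fs xstar x).
  rewrite -(bregman_avg Hn Hgrad HL Hmin x).
  have -> : INR n * (/ INR n * \big[Rplus/0]_(i < n) bregman (fs i) (grad i) x xstar) =
      \big[Rplus/0]_(i < n) bregman (fs i) (grad i) x xstar by field; lra.
  rewrite -sumR_scal; apply: sumR_le => i _; exact: cocoercive.
have HB : \big[Rplus/0]_(i < n) nsq (B i) <= 2 * L * Da.
  apply: Rle_trans (variance U Hn) _.
  rewrite -sumR_scal; apply: sumR_le => i _; exact: cocoercive.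
set SV := \big[Rplus/0]_(i < n) nsq (V i) in HV *.
set SA := \big[Rplus/0]_(i < n) nsq (A i) in HV HA.
set SB := \big[Rplus/0]_(i < n) nsq (B i) in HV HB.
set Fx := Fgap fs xstar x in HgW HA *.
set IW := inner u W in HgW *.
set Nu := nsq u.
have Hb1 : 0 < 1 + beta by lra.
have Hb2 : 0 < 1 + / beta by have := Rinv_0_lt_compat _ Hbeta; lra.
have HSV : SV <= (1 + beta) * (2 * L * (INR n * Fx)) + (1 + / beta) * (2 * L * Da).
  apply: Rle_trans HV _; apply: Rplus_le_compat; apply: Rmult_le_compat_l; lra.
have Hinv : / INR n * INR n = 1 by field; lra.
have Hi0 : 0 < / INR n by apply: Rinv_0_lt_compat.
have Heta2 : 0 <= - eta * - eta by nra.
have K1 : / INR n * (2 * - eta * IW) <= - 2 * eta * Fx.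
  have : 2 * eta * (INR n * Fx) <= 2 * eta * IW by apply: Rmult_le_compat_l; lra.
  move=> H; have : / INR n * (2 * eta * (INR n * Fx)) <= / INR n * (2 * eta * IW)
    by apply: Rmult_le_compat_l; lra.
  have -> : / INR n * (2 * eta * (INR n * Fx)) = 2 * eta * Fx by field; lra.
  have -> : / INR n * (2 * - eta * IW) = - (/ INR n * (2 * eta * IW)) by ring.
  lra.
have K2 : / INR n * (- eta * - eta * SV) <=
    eta ^ 2 * (2 * L * (1 + beta) * Fx + 2 * L * (1 + / beta) * (/ INR n * Da)).
  have : / INR n * (- eta * - eta * SV) <=
      / INR n * (- eta * - eta * ((1 + beta) * (2 * L * (INR n * Fx)) + (1 + / beta) * (2 * L * Da))).
    apply: Rmult_le_compat_l; first lra.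
    apply: Rmult_le_compat_l => //.
  have -> : / INR n * (- eta * - eta * ((1 + beta) * (2 * L * (INR n * Fx)) + (1 + / beta) * (2 * L * Da)))
     = eta ^ 2 * (2 * L * (1 + beta) * Fx + 2 * L * (1 + / beta) * (/ INR n * Da)) by field; lra.
  done.
have -> : / INR n * (INR n * Nu + 2 * - eta * IW + - eta * - eta * SV) =
   Nu + / INR n * (2 * - eta * IW) + / INR n * (- eta * - eta * SV) by field; lra.
rewrite /E2 -/Fx; lra.
Qed.

Lemma bregman_ge0 d (f : vec d -> R) g (Hg : has_gradient f g) (Hc : convex f) y x :
  0 <= bregman f g y x.
Proof. rewrite /bregman; have := grad_ineq Hg Hc x y; lra. Qed.

Lemma invINR_ge0 n : 0 <= / INR n.
Proof.
case: n => [|n]; first by rewrite /= Rinv_0; lra.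
apply: Rlt_le; apply: Rinv_0_lt_compat; exact: INR_pos.
Qed.

Lemma Gtilde_ge0 d n (fs : 'I_n -> vec d -> R) grad S xstar st
  (Hgrad : forall i, has_gradient (fs i) (grad i)) (Hconv : forall i, convex (fs i)) :
  0 <= Gtilde fs grad S xstar st.
Proof.
rewrite /Gtilde; apply: Rmult_le_pos.
  exact: invINR_ge0.
apply: sumR_ge0 => i _; exact: bregman_ge0.
Qed.

Definition Tlyap d n (fs : 'I_n -> vec d -> R) grad S xstar c (st : inner_state d n) :=
  c * nsq (vsub st.1 xstar) + Gtilde fs grad S xstar st.

Lemma split_S d n (fs : 'I_n -> vec d -> R) grad S xstar (st : inner_state d n) :
  / INR n * \big[Rplus/0]_(l < n) bregman (fs l) (grad l) (st.2 l) xstar =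
  Gtilde fs grad S xstar st + Nsum fs grad S xstar st.
Proof. by rewrite /Gtilde /Nsum (bigID (fun l => l \in S)) /= Rmult_plus_distr_l. Qed.

Lemma step_lyap d n (fs : 'I_n -> vec d -> R) grad L lam xstar S eta c beta kappa
  (Hn : (0 < n)%nat)
  (Hgrad : forall i, has_gradient (fs i) (grad i))
  (Hconv : forall i, convex (fs i))
  (HL : forall i, lipschitz_grad L (grad i))
  (Hlam : 0 < lam)
  (Hsc : strongly_convex lam (avg_fun fs))
  (Hmin : forall x, avg_fun fs xstar <= avg_fun fs x)
  (Heta : 0 < eta) (Hc : 0 < c) (Hbeta : 0 < beta) (Hkappa : 1 < kappa)
  (H1 : / kappa + 2 * L * c * eta ^ 2 * (1 + / beta) <= / INR n) st :
  / INR n * \big[Rplus/0]_(i < n) Tlyap fs grad S xstar c (hsag_step grad S eta st i)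
  <= (1 - / kappa) * Tlyap fs grad S xstar c st
     - (2 * c * eta * (1 - L * eta * (1 + beta)) - / INR n - 2 * c / (kappa * lam)) * Fgap fs xstar st.1
     + 2 * L * c * eta ^ 2 * (1 + / beta) * Nsum fs grad S xstar st.
Proof.
have HnR := INR_pos Hn.
case: st => x a.
have HG := step_G S eta Hn Hgrad Hconv HL Hmin (x, a).
have HD := step_dist S Hn Hgrad Hconv HL Hmin (Rlt_le _ _ Heta) Hbeta x a.
rewrite (split_S fs grad S xstar (x, a)) in HD.
have E : / INR n * \big[Rplus/0]_(i < n) Tlyap fs grad S xstar c (hsag_step grad S eta (x, a) i)
   = / INR n * (c * \big[Rplus/0]_(i < n) nsq (vsub (hsag_step grad S eta (x, a) i).1 xstar))
     + / INR n * \big[Rplus/0]_(i < n) Gtilde fs grad S xstar (hsag_step grad S eta (x, a) i).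
  by rewrite /Tlyap big_split sumR_scal /=; ring.
rewrite E /Tlyap.
change ((x, a).1) with x.
have Hst := strong_lb Hlam Hsc Hmin x.
have HG0 := Gtilde_ge0 S xstar (x, a) Hgrad Hconv.
set G := Gtilde fs grad S xstar (x, a) in HG HD HG0 *.
set N := Nsum fs grad S xstar (x, a) in HD *.
set F := Fgap fs xstar x in HG HD *.
rewrite /Fgap -/F in Hst.
set Nu := nsq (vsub x xstar) in HD Hst *.
set SD := \big[Rplus/0]_(i < n) nsq _ in HD *.
set SG := \big[Rplus/0]_(i < n) Gtilde _ _ _ _ _ in HG *.
have Hk0 : 0 < kappa by lra.
have HcD : / INR n * (c * SD) <= c * (Nu - 2 * eta * F + eta ^ 2 * (2 * L * (1 + beta) * F + 2 * L * (1 + / beta) * (G + N))).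
  rewrite -Rmult_assoc (Rmult_comm (/ INR n)) Rmult_assoc; apply: Rmult_le_compat_l; lra.
have Key : (1 - / kappa) * (c * Nu + G)
     - (2 * c * eta * (1 - L * eta * (1 + beta)) - / INR n - 2 * c / (kappa * lam)) * F
     + 2 * L * c * eta ^ 2 * (1 + / beta) * N
     - (c * (Nu - 2 * eta * F + eta ^ 2 * (2 * L * (1 + beta) * F + 2 * L * (1 + / beta) * (G + N)))
        + ((1 - / INR n) * G + / INR n * F))
   = c / kappa * (2 / lam * F - Nu) + G * (/ INR n - (/ kappa + 2 * L * c * eta ^ 2 * (1 + / beta))).
  field; lra.
have P1 : 0 <= c / kappa * (2 / lam * F - Nu).
  apply: Rmult_le_pos; first by apply: Rlt_le; apply: Rdiv_lt_0_compat.
  have : Nu <= 2 / lam * F.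
    have -> : 2 / lam * F = / (lam / 2) * F by field; lra.
    have -> : Nu = / (lam / 2) * (lam / 2 * Nu) by field; lra.
    apply: Rmult_le_compat_l => //; apply: Rlt_le; apply: Rinv_0_lt_compat; lra.
  lra.
have P2 : 0 <= G * (/ INR n - (/ kappa + 2 * L * c * eta ^ 2 * (1 + / beta))).
  apply: Rmult_le_pos => //; lra.
lra.
Qed.

Fixpoint Ex n r (F : seq 'I_n -> R) : R :=
  match r with
  | 0 => F [::]
  | r'.+1 => / INR n * \big[Rplus/0]_(i < n) Ex r' (fun s => F (i :: s))
  end.

Lemma Ex_le n r (F G : seq 'I_n -> R) : (forall s, F s <= G s) -> Ex r F <= Ex r G.
Proof.
elim: r F G => [|r IH] F G H /=; first exact: H.
apply: Rmult_le_compat_l; first exact: invINR_ge0.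
apply: sumR_le => i _; apply: IH => s; exact: H.
Qed.

Lemma Ex_scal n r a (F : seq 'I_n -> R) : Ex r (fun s => a * F s) = a * Ex r F.
Proof.
elim: r F => [|r IH] F //=.
rewrite (eq_bigr (fun i => a * Ex r (fun s => F (i :: s)))); last by move=> i _; rewrite IH.
rewrite sumR_scal; ring.
Qed.

Lemma Ex_const n r a (F : seq 'I_n -> R) : (0 < n)%nat ->
  Ex r (fun s => a + F s) = a + Ex r F.
Proof.
move=> Hn; have HnR := INR_pos Hn.
elim: r F => [|r IH] F //=.
rewrite (eq_bigr (fun i => a + Ex r (fun s => F (i :: s)))); last by move=> i _; rewrite IH.
rewrite big_split /= sumR_const_ord; field; lra.
Qed.

Definition hffun n r (p : 'I_n * {ffun 'I_r -> 'I_n}) : {ffun 'I_r.+1 -> 'I_n} :=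
  [ffun t => if unlift ord0 t is Some t' then p.2 t' else p.1].

Definition hffun_inv n r (w : {ffun 'I_r.+1 -> 'I_n}) : 'I_n * {ffun 'I_r -> 'I_n} :=
  (w ord0, [ffun t => w (lift ord0 t)]).

Lemma hffunK n r : cancel (@hffun n r) (@hffun_inv n r).
Proof.
case=> i w; rewrite /hffun /hffun_inv /= ffunE unlift_none; congr pair.
by apply/ffunP => t; rewrite !ffunE liftK.
Qed.

Lemma hffun_invK n r : cancel (@hffun_inv n r) (@hffun n r).
Proof.
move=> w; apply/ffunP => t; rewrite /hffun /hffun_inv ffunE.
by case: unliftP => [t'|] -> /=; rewrite ?ffunE.
Qed.

Lemma hffun_map n r i (w : {ffun 'I_r -> 'I_n}) :
  [seq hffun (i, w) t | t <- enum 'I_r.+1] = i :: [seq w t | t <- enum 'I_r].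
Proof.
rewrite enum_ordSl /= /hffun ffunE unlift_none /=; congr cons.
rewrite -map_comp; apply: eq_map => t /=; by rewrite ffunE liftK.
Qed.

Lemma Ex_ffun n r (F : seq 'I_n -> R) :
  \big[Rplus/0]_(w : {ffun 'I_r -> 'I_n}) ((/ INR n) ^ r * F [seq w t | t <- enum 'I_r]) = Ex r F.
Proof.
elim: r F => [|r IH] F.
  rewrite /= (eq_bigr (fun _ => F [::])); last first.
    move=> w _; rewrite Rmult_1_l; congr F.
    by apply: size0nil; rewrite size_map size_enum_ord.
  rewrite sumR_const card_ffun !card_ord expn0 /=; ring.
rewrite (reindex (@hffun n r)); last first.
  by exists (@hffun_inv n r) => x _; [apply: hffunK | apply: hffun_invK].
rewrite -(pair_big xpredT xpredT (fun i w => (/ INR n) ^ r.+1 * F [seq hffun (i, w) t | t <- enum 'I_r.+1])) /=.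
rewrite -sumR_scal; apply: eq_bigr => i _.
rewrite -(IH (fun s => F (i :: s))) -sumR_scal; apply: eq_bigr => w _.
rewrite hffun_map /=; ring.
Qed.

Definition Zs q r := \big[Rplus/0]_(t < r) q ^ (r - t.+1)%nat.

Lemma Zs_rec q r : Zs q r.+1 = q ^ r + Zs q r.
Proof.
rewrite /Zs big_ord_recl /= subn1 /=; congr (_ + _).
Qed.

Lemma Ex_ext n r (F G : seq 'I_n -> R) : (forall s, F s = G s) -> Ex r F = Ex r G.
Proof. move=> H; apply: Rle_antisym; apply: Ex_le => s; rewrite H; lra. Qed.

Lemma Nsum_step d n (fs : 'I_n -> vec d -> R) grad S xstar eta st i :
  Nsum fs grad S xstar (hsag_step grad S eta st i) = Nsum fs grad S xstar st.
Proof.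
rewrite /Nsum /hsag_step /=; congr (_ * _); apply: eq_bigr => l Hl.
by rewrite (negbTE Hl) andbF.
Qed.

Lemma traj_bound d n (fs : 'I_n -> vec d -> R) grad L lam xstar S eta c beta kappa
  (Hn : (0 < n)%nat)
  (Hgrad : forall i, has_gradient (fs i) (grad i))
  (Hconv : forall i, convex (fs i))
  (HL : forall i, lipschitz_grad L (grad i))
  (Hlam : 0 < lam)
  (Hsc : strongly_convex lam (avg_fun fs))
  (Hmin : forall x, avg_fun fs xstar <= avg_fun fs x)
  (Heta : 0 < eta) (Hc : 0 < c) (Hbeta : 0 < beta) (Hkappa : 1 < kappa)
  (H1 : / kappa + 2 * L * c * eta ^ 2 * (1 + / beta) <= / INR n) r :
  forall (st dflt : inner_state d n),
  Ex r (fun ws => \big[Rplus/0]_(t < r) (((1 - / kappa) ^ (r - t.+1)%nat *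
          (2 * c * eta * (1 - L * eta * (1 + beta)) - / INR n - 2 * c / (kappa * lam))) *
          Fgap fs xstar (nth dflt (hsag_traj grad S eta st ws) t).1)
        + Tlyap fs grad S xstar c (nth dflt (hsag_traj grad S eta st ws) r))
  <= (1 - / kappa) ^ r * Tlyap fs grad S xstar c st
     + 2 * L * c * eta ^ 2 * (1 + / beta) * Nsum fs grad S xstar st * Zs (1 - / kappa) r.
Proof.
set q := 1 - / kappa.
set del := 2 * c * eta * (1 - L * eta * (1 + beta)) - / INR n - 2 * c / (kappa * lam).
set e := 2 * L * c * eta ^ 2 * (1 + / beta).
have Hq : 0 < q by rewrite /q; have := Rinv_lt_contravar 1 kappa ltac:(lra) Hkappa; rewrite Rinv_1; lra.
have HnR := INR_pos Hn.
elim: r => [|r IH] st dflt.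
  rewrite /= big_ord0 /Zs big_ord0; lra.
rewrite [Ex _ _]/=.
rewrite (eq_bigr (fun i => q ^ r * del * Fgap fs xstar st.1 +
   Ex r (fun ws => \big[Rplus/0]_(t < r) (q ^ (r - t.+1)%nat * del *
          Fgap fs xstar (nth dflt (hsag_traj grad S eta (hsag_step grad S eta st i) ws) t).1)
        + Tlyap fs grad S xstar c (nth dflt (hsag_traj grad S eta (hsag_step grad S eta st i) ws) r)))); last first.
  move=> i _; rewrite -Ex_const //; apply: Ex_ext => s /=.
  rewrite big_ord_recl /= subn1 /= Rplus_assoc; congr (_ + _); congr (_ + _).
have Hstep := @step_lyap d n fs grad L lam xstar S eta c beta kappa Hn Hgrad Hconv HL Hlam Hsc Hmin Heta Hc Hbeta Hkappa H1 st.
rewrite -/q -/del -/e in Hstep.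
have Hb : / INR n * \big[Rplus/0]_(i < n) (q ^ r * del * Fgap fs xstar st.1 +
   Ex r (fun ws => \big[Rplus/0]_(t < r) (q ^ (r - t.+1)%nat * del *
          Fgap fs xstar (nth dflt (hsag_traj grad S eta (hsag_step grad S eta st i) ws) t).1)
        + Tlyap fs grad S xstar c (nth dflt (hsag_traj grad S eta (hsag_step grad S eta st i) ws) r)))
  <= / INR n * \big[Rplus/0]_(i < n) (q ^ r * del * Fgap fs xstar st.1 +
      (q ^ r * Tlyap fs grad S xstar c (hsag_step grad S eta st i) + e * Nsum fs grad S xstar st * Zs q r)).
  apply: Rmult_le_compat_l; first exact: invINR_ge0.
  apply: sumR_le => i _; apply: Rplus_le_compat_l.
  have := IH (hsag_step grad S eta st i) dflt; rewrite Nsum_step; exact.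
apply: Rle_trans Hb _.
rewrite !big_split /= !sumR_const_ord sumR_scal Zs_rec.
set Ts := / INR n * \big[Rplus/0]_(i < n) Tlyap fs grad S xstar c (hsag_step grad S eta st i) in Hstep.
have -> : / INR n * (INR n * (q ^ r * del * Fgap fs xstar st.1) +
      (q ^ r * \big[Rplus/0]_(i < n) Tlyap fs grad S xstar c (hsag_step grad S eta st i) +
       INR n * (e * Nsum fs grad S xstar st * Zs q r)))
   = q ^ r * del * Fgap fs xstar st.1 + q ^ r * Ts + e * Nsum fs grad S xstar st * Zs q r.
  rewrite /Ts; field; lra.
have Hqr : 0 <= q ^ r by apply: pow_le; lra.
have := Rmult_le_compat_l _ _ _ Hqr Hstep.
rewrite /=; set T0 := Tlyap fs grad S xstar c st.
set Fx := Fgap fs xstar st.1. set Nx := Nsum fs grad S xstar st.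
move=> H.
have -> : q * q ^ r = q ^ r * q by ring.
have E1 : q ^ r * (q * T0 - del * Fx + e * Nx) = q ^ r * q * T0 - q ^ r * del * Fx + q ^ r * e * Nx by ring.
have E2 : e * Nx * (q ^ r + Zs q r) = q ^ r * e * Nx + e * Nx * Zs q r by ring.
have E3 : q ^ r * q * T0 = q ^ r * q * T0 by ring.
lra.
Qed.

Lemma Zs_geo q r : Zs q r * (1 - q) = 1 - q ^ r.
Proof.
elim: r => [|r IH]; first by rewrite /Zs big_ord0 /=; ring.
rewrite Zs_rec /=; rewrite Rmult_plus_distr_r IH; ring.
Qed.

Lemma epoch_bound d n (fs : 'I_n -> vec d -> R) (grad : 'I_n -> vec d -> vec d)
  (L lam : R) (xstar : vec d) (S : {set 'I_n})
  (eta : R) (m : nat) (c beta kappa : R) (p : nat -> R)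
  (Hn : (0 < n)%nat)
  (Hgrad : forall i, has_gradient (fs i) (grad i))
  (Hconv : forall i, convex (fs i))
  (HL : forall i, lipschitz_grad L (grad i))
  (Hlam : 0 < lam)
  (Hsc : strongly_convex lam (avg_fun fs))
  (Hmin : forall x, avg_fun fs xstar <= avg_fun fs x)
  (Heta : 0 < eta) (Hm : (1 <= m)%nat) (Hc : 0 < c) (Hbeta : 0 < beta)
  (Hkappa : 1 < kappa)
  (H1 : / kappa + 2 * L * c * eta ^ 2 * (1 + / beta) <= / INR n)
  (Hgamma : 0 < hsag_gamma n m L lam eta c beta kappa)
  (Htheta : hsag_theta n m L lam eta c beta kappa < 1)
  (Hp : forall j, (1 <= j <= m)%nat ->
     p j = (1 - / kappa) ^ (m - j) /
           \big[Rplus/0]_(l < m) (1 - / kappa) ^ (m - l.+1)) (s : inner_state d n) :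
  let Phi := fun s : vec d * ('I_n -> vec d) =>
     avg_fun fs s.1 - avg_fun fs xstar
     + / hsag_gamma n m L lam eta c beta kappa * Gtilde fs grad S xstar s in
  epoch_op m grad S eta p Phi s <= hsag_theta n m L lam eta c beta kappa * Phi s.
Proof.
move=> Phi.
set q := 1 - / kappa.
set del := 2 * c * eta * (1 - L * eta * (1 + beta)) - / INR n - 2 * c / (kappa * lam).
set e := 2 * L * c * eta ^ 2 * (1 + / beta).
set g := hsag_gamma n m L lam eta c beta kappa.
set th := hsag_theta n m L lam eta c beta kappa.
set Z := Zs q m.
have HnR := INR_pos Hn.
have Hk0 : 0 < kappa by lra.
have Hq : 0 < q by rewrite /q; have := Rinv_lt_contravar 1 kappa ltac:(lra) Hkappa; rewrite Rinv_1; lra.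
have Hq1 : q < 1 by rewrite /q; have := Rinv_0_lt_compat _ Hk0; lra.
have HZ : Z = kappa * (1 - q ^ m).
  have := Zs_geo q m; rewrite -/Z => H.
  have -> : Z = Z * (1 - q) * kappa by rewrite /q; field; lra.
  by rewrite H; ring.
have Hqm : q ^ m < 1.
  have := pow_lt_1_compat q m (conj (Rlt_le _ _ Hq) Hq1) (ltP Hm); lra.
have HZp : 0 < Z by rewrite HZ; nra.
have Hg : g = Z * del by rewrite /g /hsag_gamma HZ.
have Hdel : 0 < del.
  have := Hgamma; rewrite -/g Hg => H.
  by apply: (Rmult_lt_reg_l Z); rewrite ?Rmult_0_r.
have Hgp : 0 < g by [].
set x0 := s.1.
set st0 : inner_state d n := (x0, fun i => if i \in S then s.2 i else x0).
set Hf := fun ws => \big[Rplus/0]_(t < m) ((q ^ (m - t.+1)%nat * del) *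
          Fgap fs xstar (nth st0 (hsag_traj grad S eta st0 ws) t).1)
        + Tlyap fs grad S xstar c (nth st0 (hsag_traj grad S eta st0 ws) m).
have HTB := @traj_bound d n fs grad L lam xstar S eta c beta kappa Hn Hgrad Hconv HL Hlam Hsc Hmin Heta Hc Hbeta Hkappa H1 m st0 st0.
rewrite -/q -/del -/e -/Z -/Hf in HTB.
set Fm := fun ws : seq 'I_n => \big[Rplus/0]_(j < m) (p j.+1 *
   Phi ((nth st0 (hsag_traj grad S eta st0 ws) j).1, (nth st0 (hsag_traj grad S eta st0 ws) m).2)).
have EOp : epoch_op m grad S eta p Phi s = Ex m Fm.
  rewrite /epoch_op -Ex_ffun; apply: eq_bigr => w _; reflexivity.
rewrite EOp.
have HFm : forall ws, Fm ws <= / g * Hf ws.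
  move=> ws; rewrite /Fm /Hf /Phi.
  set Gm := Gtilde fs grad S xstar (nth st0 (hsag_traj grad S eta st0 ws) m).
  have EG : forall j : 'I_m, Gtilde fs grad S xstar ((nth st0 (hsag_traj grad S eta st0 ws) j).1,
        (nth st0 (hsag_traj grad S eta st0 ws) m).2) = Gm by [].
  rewrite (eq_bigr (fun j : 'I_m => / g * ((q ^ (m - j.+1)%nat * del) *
          Fgap fs xstar (nth st0 (hsag_traj grad S eta st0 ws) j).1) + (q ^ (m - j.+1)%nat * / Z) * (/ g * Gm))); last first.
    move=> j _; rewrite EG Hp; last by apply/andP; split => //; exact: ltn_ord.
    have EZ : \big[Rplus/0]_(l < m) q ^ (m - l.+1)%nat = Z by [].
    rewrite -/q EZ -/g /Fgap Hg /=; field; lra.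
  rewrite big_split /= sumR_scal -big_distrl -big_distrl /=.
  have EZ2 : \big[Rplus/0]_(l < m) q ^ (m - l.+1)%nat = Z by [].
  rewrite EZ2 Rinv_r; last lra.
  have HT : Gm <= Tlyap fs grad S xstar c (nth st0 (hsag_traj grad S eta st0 ws) m).
    rewrite /Tlyap -/Gm; have := nsq_ge0 (vsub (nth st0 (hsag_traj grad S eta st0 ws) m).1 xstar); nra.
  have Hig : 0 < / g by apply: Rinv_0_lt_compat.
  set A := \big[Rplus/0]_(j < m) _.
  have := Rmult_le_compat_l _ _ _ (Rlt_le _ _ Hig) HT.
  lra.
have HEx : Ex m Fm <= / g * (q ^ m * Tlyap fs grad S xstar c st0 + e * Nsum fs grad S xstar st0 * Z).
  apply: Rle_trans (Ex_le m HFm) _; rewrite Ex_scal.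
  apply: Rmult_le_compat_l => //; apply: Rlt_le; exact: Rinv_0_lt_compat.
apply: Rle_trans HEx _.
set F0 := Fgap fs xstar x0.
set G0 := Gtilde fs grad S xstar s.
have HF0 : 0 <= F0 by rewrite /F0 /Fgap; have := Hmin x0; lra.
have HG0 : 0 <= G0 := Gtilde_ge0 S xstar s Hgrad Hconv.
have EG0 : Gtilde fs grad S xstar st0 = G0.
  rewrite /Gtilde /G0; congr (_ * _); apply: eq_bigr => i Hi /=; by rewrite Hi.
have HT0 : Tlyap fs grad S xstar c st0 <= c * (2 / lam) * F0 + G0.
  rewrite /Tlyap EG0 /=.
  have := strong_lb Hlam Hsc Hmin x0; rewrite -/x0 => H.
  have : nsq (vsub x0 xstar) <= 2 / lam * F0.
    have -> : 2 / lam * F0 = / (lam / 2) * F0 by field; lra.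
    have -> : nsq (vsub x0 xstar) = / (lam / 2) * (lam / 2 * nsq (vsub x0 xstar)) by field; lra.
    apply: Rmult_le_compat_l; [apply: Rlt_le; apply: Rinv_0_lt_compat; lra| exact: H].
  move=> H2; have := Rmult_le_compat_l _ _ _ (Rlt_le _ _ Hc) H2; lra.
have HN0 : 0 <= Nsum fs grad S xstar st0.
  apply: Rmult_le_pos; first exact: invINR_ge0.
  apply: sumR_ge0 => i _; exact: bregman_ge0.
have HNF : Nsum fs grad S xstar st0 <= F0.
  rewrite /F0 -(bregman_avg Hn Hgrad HL Hmin x0) /Nsum.
  apply: Rmult_le_compat_l; first exact: invINR_ge0.
  rewrite [X in _ <= X](bigID (fun l => l \notin S)) /=.
  rewrite (eq_bigr (fun i => bregman (fs i) (grad i) x0 xstar)); last first.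
    by move=> i /negbTE Hi /=; rewrite Hi.
  apply: le_addr; apply: sumR_ge0 => i _; exact: bregman_ge0.
have HeN : e * Nsum fs grad S xstar st0 * Z <= e * F0 * Z.
  have [HL0|HLn] : 0 <= L \/ L < 0 by lra.
    have He : 0 <= e.
      rewrite /e; apply: Rmult_le_pos; last by have := Rinv_0_lt_compat _ Hbeta; lra.
      apply: Rmult_le_pos; last by apply: pow_le; lra.
      nra.
    apply: Rmult_le_compat_r; first lra.
    apply: Rmult_le_compat_l => //.
  (* L < 0 : all points coincide, so F0 = 0 *)
  have i0 : 'I_n := Ordinal Hn.
  have H := HL i0 x0 xstar.
  have Hw := vnorm_ge0 (vsub (grad i0 x0) (grad i0 xstar)).
  have Hv := vnorm_ge0 (vsub x0 xstar).
  have Hv0 : vnorm (vsub x0 xstar) <= 0 by nra.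
  have Hx : x0 = xstar.
    apply: functional_extensionality => j.
    have := nsq_eq0 (vnorm0_nsq Hv0) j; rewrite /vsub; lra.
  have HF00 : F0 = 0 by rewrite /F0 /Fgap Hx; ring.
  rewrite HF00.
  have He : e <= 0.
    rewrite /e.
    have : 0 <= c * eta ^ 2 * (1 + / beta).
      apply: Rmult_le_pos; last by have := Rinv_0_lt_compat _ Hbeta; lra.
      apply: Rmult_le_pos; [lra| apply: pow_le; lra].
    move=> H0; have -> : 2 * L * c * eta ^ 2 * (1 + / beta) = 2 * L * (c * eta ^ 2 * (1 + / beta)) by ring.
    nra.
  have : e * Nsum fs grad S xstar st0 <= 0 by nra.
  move=> H3; have := Rmult_le_compat_r _ _ _ (Rlt_le _ _ HZp) H3; lra.
have Hth1 : 2 * c / (g * lam) * q ^ m + 2 * L * c * eta ^ 2 / g * (1 + / beta) * kappa * (1 - q ^ m) <= th.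
  by apply: Rmax_l.
have Hth2 : q ^ m <= th by apply: Rmax_r.
have EPhi : Phi s = F0 + / g * G0 by [].
rewrite EPhi.
have Hig : 0 < / g by apply: Rinv_0_lt_compat.
have Hqm0 : 0 <= q ^ m by apply: pow_le; lra.
have B1 : / g * (q ^ m * Tlyap fs grad S xstar c st0 + e * Nsum fs grad S xstar st0 * Z)
   <= / g * (q ^ m * (c * (2 / lam) * F0 + G0) + e * F0 * Z).
  apply: Rmult_le_compat_l; first lra.
  apply: Rplus_le_compat => //; apply: Rmult_le_compat_l => //.
apply: Rle_trans B1 _.
have E1 : / g * (q ^ m * (c * (2 / lam) * F0 + G0) + e * F0 * Z)
  = (2 * c / (g * lam) * q ^ m + 2 * L * c * eta ^ 2 / g * (1 + / beta) * kappa * (1 - q ^ m)) * F0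
    + q ^ m * (/ g * G0).
  rewrite /e HZ; field; lra.
rewrite E1.
have : (2 * c / (g * lam) * q ^ m + 2 * L * c * eta ^ 2 / g * (1 + / beta) * kappa * (1 - q ^ m)) * F0 <= th * F0.
  by apply: Rmult_le_compat_r.
have : q ^ m * (/ g * G0) <= th * (/ g * G0).
  apply: Rmult_le_compat_r => //; apply: Rmult_le_pos; lra.
lra.
Qed.

Lemma Op_mono d n m grad S eta p (Psi1 Psi2 : inner_state d n -> R) :
  (forall j : 'I_m, 0 <= p j.+1) -> (forall s, Psi1 s <= Psi2 s) ->
  forall s, epoch_op m grad S eta p Psi1 s <= epoch_op m grad S eta p Psi2 s.
Proof.
move=> Hp H s; rewrite /epoch_op; apply: sumR_le => w _.
apply: Rmult_le_compat_l; first by apply: pow_le; exact: invINR_ge0.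
apply: sumR_le => j _; apply: Rmult_le_compat_l => //.
Qed.

Lemma Op_scal d n m grad S eta p a (Psi : inner_state d n -> R) s :
  epoch_op m grad S eta p (fun s => a * Psi s) s = a * epoch_op m grad S eta p Psi s.
Proof.
rewrite /epoch_op -sumR_scal; apply: eq_bigr => w _.
rewrite (eq_bigr (fun j : 'I_m => a * (p j.+1 * Psi (hsag_epoch grad S eta s w j)))); last first.
  by move=> j _; ring.
rewrite sumR_scal -[LHS]Rmult_assoc [X in X * _ = _]Rmult_comm Rmult_assoc. reflexivity.
Qed.

Lemma iter_mono d n m grad S eta p (Psi1 Psi2 : inner_state d n -> R) k :
  (forall j : 'I_m, 0 <= p j.+1) -> (forall s, Psi1 s <= Psi2 s) ->
  forall s, Nat.iter k (epoch_op m grad S eta p) Psi1 s <= Nat.iter k (epoch_op m grad S eta p) Psi2 s.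
Proof.
move=> Hp H; elim: k => [|k IH] s /=; first exact: H.
exact: Op_mono.
Qed.

Lemma iter_scal d n m grad S eta p a (Psi : inner_state d n -> R) k s :
  Nat.iter k (epoch_op m grad S eta p) (fun s => a * Psi s) s = a * Nat.iter k (epoch_op m grad S eta p) Psi s.
Proof.
elim: k s => [|k IH] s //=.
rewrite (functional_extensionality _ (fun s => a * Nat.iter k (epoch_op m grad S eta p) Psi s) IH).
exact: Op_scal.
Qed.

Lemma iter_succ d n m grad S eta p (Psi : inner_state d n -> R) k s :
  Nat.iter k.+1 (epoch_op m grad S eta p) Psi s = Nat.iter k (epoch_op m grad S eta p) (epoch_op m grad S eta p Psi) s.
Proof.
elim: k s => [|k IH] s //.
change (epoch_op m grad S eta p (Nat.iter k.+1 (epoch_op m grad S eta p) Psi) s =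
  epoch_op m grad S eta p (Nat.iter k (epoch_op m grad S eta p) (epoch_op m grad S eta p Psi)) s).
have E : Nat.iter k.+1 (epoch_op m grad S eta p) Psi = Nat.iter k (epoch_op m grad S eta p) (epoch_op m grad S eta p Psi).
  apply: functional_extensionality => s'; exact: IH.
by rewrite E.
Qed.

Unset Implicit Arguments.

Theorem theorem1
  (d n : nat) (fs : 'I_n -> vec d -> R) (grad : 'I_n -> vec d -> vec d)
  (L lam : R) (xstar x0 : vec d) (S : {set 'I_n})
  (eta : R) (m : nat) (c beta kappa : R) (p : nat -> R)
  (Hn : (0 < n)%nat)
  (Hgrad : forall i, has_gradient (fs i) (grad i))
  (Hconv : forall i, convex (fs i))
  (HL : forall i, lipschitz_grad L (grad i))
  (Hlam : 0 < lam)
  (Hsc : strongly_convex lam (avg_fun fs))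
  (Hmin : forall x, avg_fun fs xstar <= avg_fun fs x)
  (Heta : 0 < eta) (Hm : (1 <= m)%nat) (Hc : 0 < c) (Hbeta : 0 < beta)
  (Hkappa : 1 < kappa)
  (H1 : / kappa + 2 * L * c * eta ^ 2 * (1 + / beta) <= / INR n)
  (Hgamma : 0 < hsag_gamma n m L lam eta c beta kappa)
  (Htheta : hsag_theta n m L lam eta c beta kappa < 1)
  (Hp : forall j, (1 <= j <= m)%nat ->
     p j = (1 - / kappa) ^ (m - j) /
           \big[Rplus/0]_(l < m) (1 - / kappa) ^ (m - l.+1)) :
  let Phi := fun s : vec d * ('I_n -> vec d) =>
     avg_fun fs s.1 - avg_fun fs xstar
     + / hsag_gamma n m L lam eta c beta kappa * Gtilde fs grad S xstar s in
  forall k : nat,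
    hsag_expect m grad S eta p x0 k.+1 Phi
      <= hsag_theta n m L lam eta c beta kappa * hsag_expect m grad S eta p x0 k Phi.
Proof.
move=> Phi k.
have Hb : forall s, epoch_op m grad S eta p Phi s <= hsag_theta n m L lam eta c beta kappa * Phi s.
  move=> s; exact: (@epoch_bound d n fs grad L lam xstar S eta m c beta kappa p Hn Hgrad Hconv HL
     Hlam Hsc Hmin Heta Hm Hc Hbeta Hkappa H1 Hgamma Htheta Hp s).
have Hp0 : forall j : 'I_m, 0 <= p j.+1.
  move=> j; rewrite Hp; last by apply/andP; split => //; exact: ltn_ord.
  have Hq : 0 <= 1 - / kappa.
    have := Rinv_lt_contravar 1 kappa ltac:(lra) Hkappa; rewrite Rinv_1; lra.
  apply: Rmult_le_pos; first by apply: pow_le.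
  apply: Rlt_le; apply: Rinv_0_lt_compat.
  rewrite (bigD1 j) //=; apply: Rlt_le_trans (le_addr _ _); last by apply: sumR_ge0 => i _; apply: pow_le.
  apply: pow_lt; have := Rinv_lt_contravar 1 kappa ltac:(lra) Hkappa; rewrite Rinv_1; lra.
rewrite /hsag_expect iter_succ.
rewrite -iter_scal.
exact: (@iter_mono d n m grad S eta p _ _ k Hp0 Hb).
Qed.
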